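(* Consider the following bit commitment protocol: (commit) the committer chooses a bit $b$ and, before splitting into two agents Bob and Brian, shares it between them; (open) Bob and Brian, who cannot communicate with each other during the open phase, independently send Alice bits $x$ and $y$, respectively; (verify) Alice accepts the commitment of $b$ iff $b=x=y$. In the local command model, a dishonest Bob and Brian may prepare any shared resources before the split; in the open phase an external command $b\in\{0,1\}$ is given to Bob only, Bob's behaviour may depend on $b$, while Brian's behaviour is independent of $b$, and the joint distribution of $(x,y)$ given their respective strategies satisfies no-signalling between Bob and Brian. Let $p_b$ denote the probability that Alice accepts (i.e. $x=y=b$) when the command is $b$. Then for every such cheating strategy, $p_0+p_1\le 1$; i.e. the protocol is $\varepsilon$-weakly binding with $\varepsilon=0$ in the local command model.
   Context: A protocol is $\varepsilon$-weakly binding if for all cheating strategies allowed by the model, $p_0+p_1\le 1+\varepsilon$, where $p_b$ is the probability that Alice accepts an opening of $b$. *)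

(* Defs.v *)
From mathcomp Require Import all_boot all_order all_algebra.
Set Implicit Arguments. Unset Strict Implicit. Unset Printing Implicit Defensive.
Import Order.TTheory GRing.Theory Num.Theory.
Local Open Scope ring_scope.

(* A cheating strategy in the local command model is described by its
   behaviour: for each external command b (given to Bob only), the joint
   distribution P b x y of Bob's output x and Brian's output y. *)
Definition is_distr (R : realFieldType) (p : bool -> bool -> R) : Prop :=
  (forall x y, 0 <= p x y) /\ \sum_(x : bool) \sum_(y : bool) p x y = 1.

Definition no_signalling_local_command (R : realFieldType)
  (P : bool -> bool -> bool -> R) : Prop :=
  forall y, \sum_(x : bool) P false x y = \sum_(x : bool) P true x y.

Definition local_command_strategy (R : realFieldType)
  (P : bool -> bool -> bool -> R) : Prop :=
  (forall b, is_distr (P b)) /\ no_signalling_local_command P.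

Definition p_accept (R : realFieldType) (P : bool -> bool -> bool -> R)
  (b : bool) : R := P b b b.

Definition weakly_binding (R : realFieldType)
  (strategy : (bool -> bool -> bool -> R) -> Prop) (eps : R) : Prop :=
  forall P, strategy P -> p_accept P false + p_accept P true <= 1 + eps.

(* Main.v *)
Require Import Defs.
From mathcomp Require Import all_boot all_order all_algebra.
From mathcomp Require Import lra.
Import Order.TTheory GRing.Theory Num.Theory.
Local Open Scope ring_scope.

Theorem lemma3 (R : realFieldType) :
  weakly_binding (@local_command_strategy R) 0.
Proof.
move=> P [Hd Hns]; rewrite /p_accept addr0.
have [n0 s0] := Hd false; have [n1 s1] := Hd true.
have h := Hns true.
rewrite !big_bool /= in s0 s1 h.
have := n0 true true; have := n0 true false; have := n0 false true;
have := n0 false false; have := n1 false true; have := n1 true false;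
have := n1 true true; have := n1 false false.
lra.
Qed.
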